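(* Let $\mathcal K$ be any simplicial complex on $[m]$ and $\mathbf k$ a commutative ring. In the homology algebra $H(\Omega_*\mathbf k\langle\mathcal K\rangle)$ of the dg-algebra below, the classes $u_i=[\chi_{e_i}]$ and $w_I=[\psi_I]$ (for $I\in\mathrm{MF}(\mathcal K)$) satisfy: (1) $u_i^2=0$ for all $i$, and $[u_i,u_j]=0$ for all $\{i,j\}\in\mathcal K$; (2) $[u_i,w_I]=0$ if $i\in I\in\mathrm{MF}(\mathcal K)$; (3) $\sum_{i\in L,\ L\setminus\{i\}\notin\mathcal K}[u_i,w_{L\setminus\{i\}}]=0$ for every $L\in\mathrm{AMF}(\mathcal K)$.
   Context: $\Omega_*\mathbf k\langle\mathcal K\rangle$ is the dg-algebra $T(\chi_\alpha:\alpha\in\mathbb Z_{\ge0}^m\setminus\{0\},\ \operatorname{supp}\alpha\in\mathcal K)$ (free graded associative algebra), $\deg\chi_\alpha=2|\alpha|-1$ where $|\alpha|=\sum\alpha_i$ and $\operatorname{supp}\alpha=\{i:\alpha_i\ne0\}$, with differential $d(\chi_\alpha)=\sum_{\alpha=\beta+\gamma,\ \beta,\gamma\ne0}\chi_\beta\chi_\gamma$ extended as a derivation with Koszul signs. For $A\subseteq[m]$ write $\chi_A=\chi_{\sum_{i\in A}e_i}$, and for $I$ with all proper subsets in $\mathcal K$ set $\psi_I=\sum_{I=A\sqcup B,\ A,B\ne\varnothing}\chi_A\chi_B$ (a cycle). (This homology algebra is isomorphic to $H_*(\Omega DJ_{\mathcal K};\mathbf k)\cong\operatorname{Ext}_{\mathbf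 k[\mathcal K]}(\mathbf k,\mathbf k)$.) $[x,y]=xy-(-1)^{|x||y|}yx$. $\mathrm{MF}(\mathcal K)$: subsets $I\notin\mathcal K$ with all proper subsets in $\mathcal K$. $\mathrm{AMF}(\mathcal K)$: subsets $L$ with all subsets of size $\le|L|-2$ in $\mathcal K$ but not all subsets of size $|L|-1$ in $\mathcal K$ (i.e. $\partial^2\Delta_L\subseteq\mathcal K_L\subsetneq\partial\Delta_L$). *)

(* Defs.v *)
From HB Require Import structures.
From mathcomp Require Import all_boot all_order all_algebra.
Set Implicit Arguments. Unset Strict Implicit. Unset Printing Implicit Defensive.
Import GRing.Theory.
Local Open Scope ring_scope.

(* The dg-algebra Omega_* k<K> is the free graded associative
   k-algebra on letters chi_alpha; we represent its elements as finite formal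
   k-linear combinations of words (lists of letters). *)

Section Omega.
Variable m : nat.

Definition letter := {ffun 'I_m -> nat}.
Definition word := seq letter.
Definition l0 : letter := [ffun => 0%N].

Definition lnz (a : letter) : bool := [exists i, a i != 0%N].
Definition supp (a : letter) : {set 'I_m} := [set i | a i != 0%N].

Definition simplicial_complex (K : {set {set 'I_m}}) : Prop :=
  (forall A B : {set 'I_m}, B \subset A -> A \in K -> B \in K) /\
  (forall i : 'I_m, [set i] \in K).

Variable K : {set {set 'I_m}}.

Definition valid_letter (a : letter) : bool := lnz a && (supp a \in K).

Definition chiA (A : {set 'I_m}) : letter := [ffun i => nat_of_bool (i \in A)].

(* Coefficient of the word w in d(v), for v a word of generators.  Each letter has
   odd degree 2|alpha|-1, so the Koszul sign for differentiating the j-th letter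
   (0-indexed) is (-1)^j; d(chi_a) = sum_{a = b + c, b,c <> 0} chi_b chi_c. *)
Definition dcoef (v w : word) : int :=
  if size w == (size v).+1 then
    \sum_(j < size v)
      (if [&& take j w == take j v, drop j.+2 w == drop j.+1 v,
              lnz (nth l0 w j), lnz (nth l0 w j.+1) &
              [ffun i => (nth l0 w j i + nth l0 w j.+1 i)%N] == nth l0 v j]
       then (-1) ^+ j else 0)
  else 0.

Variable k : comPzRingType.

Definition chain := seq (k * word).

Definition coeff (x : chain) (w : word) : k := \sum_(p <- x | p.2 == w) p.1.

Definition chain_add (x y : chain) : chain := x ++ y.
Definition chain_scale (c : k) (x : chain) : chain := [seq (c * p.1, p.2) | p <- x].
Definition chain_mul (x y : chain) : chain :=
  [seq (p.1 * q.1, p.2 ++ q.2) | p <- x, q <- y].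

Definition gcomm (dx dy : nat) (x y : chain) : chain :=
  chain_add (chain_mul x y) (chain_scale (- (-1) ^+ (dx * dy)) (chain_mul y x)).

Definition in_Omega (z : chain) : bool := all (fun p => all valid_letter p.2) z.

(* x represents the zero class in homology: x = d z for some z in Omega_* k<K> *)
Definition is_boundary (x : chain) : Prop :=
  exists z : chain, in_Omega z /\
    forall w : word, coeff x w = \sum_(p <- z) p.1 * (dcoef p.2 w)%:~R.

Definition u_chain (i : 'I_m) : chain := [:: (1, [:: chiA [set i]])].

Definition psi (I : {set 'I_m}) : chain :=
  [seq (1, [:: chiA A; chiA (I :\: A)])
  | A <- enum [set A : {set 'I_m} | [&& A \subset I, A != set0 & A != I]]].

Definition MF (I : {set 'I_m}) : bool :=
  (I \notin K) && [forall J : {set 'I_m}, (J \proper I) ==> (J \in K)].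

Definition AMF (L : {set 'I_m}) : bool :=
  [forall J : {set 'I_m}, ((J \subset L) && (#|J|.+2 <= #|L|)%N) ==> (J \in K)] &&
  ~~ [forall J : {set 'I_m}, ((J \subset L) && (#|J|.+1 == #|L|)%N) ==> (J \in K)].

(* sum_{i in L, L \ {i} notin K} [u_i, w_{L\{i}}], with deg u_i = 1 and
   deg w_I = 2|I| - 2 *)
Definition amf_sum (L : {set 'I_m}) : chain :=
  flatten [seq gcomm 1 (2 * #|L :\ i| - 2) (u_chain i) (psi (L :\ i))
          | i <- enum L & (L :\ i) \notin K].

End Omega.

(* Main.v *)
Require Import Defs.
From mathcomp Require Import all_boot all_order all_algebra ring zify.
Set Implicit Arguments. Unset Strict Implicit. Unset Printing Implicit Defensive.
Import GRing.Theory.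


Section S1.
Local Open Scope ring_scope.
Variable m : nat.
Variable K : {set {set 'I_m}}.
Variable k : comPzRingType.

Definition ladd (a b : letter m) : letter m := [ffun j => (a j + b j)%N].
Definition eL (i : 'I_m) : letter m := chiA [set i].

Lemma letterP (a b : letter m) : (a = b) <-> forall j, a j = b j.
Proof. by split=> [->//|H]; apply/ffunP. Qed.
Lemma laddE a b j : ladd a b j = (a j + b j)%N. Proof. by rewrite ffunE. Qed.
Lemma chiAE (A : {set 'I_m}) j : chiA A j = (j \in A) :> nat. Proof. by rewrite ffunE. Qed.
Lemma lnzP (a : letter m) : reflect (exists j, a j != 0%N) (lnz a).
Proof. exact: existsP. Qed.
Lemma laddC a b : ladd a b = ladd b a.
Proof. by apply/letterP=> j; rewrite !laddE addnC. Qed.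
Lemma laddA a b c : ladd (ladd a b) c = ladd a (ladd b c).
Proof. by apply/letterP=> j; rewrite !laddE addnA. Qed.
Lemma lnz_laddl a b : lnz a -> lnz (ladd a b).
Proof. by case/lnzP=> j Hj; apply/lnzP; exists j; rewrite laddE; case: (a j) Hj. Qed.

Lemma coeff_cons (c : k) v (x : chain m k) w :
  coeff ((c, v) :: x) w = (if v == w then c else 0) + coeff x w.
Proof. by rewrite /coeff big_cons /=; case: (v == w); rewrite ?add0r. Qed.
Lemma coeff_nil w : coeff ([::] : chain m k) w = 0.
Proof. by rewrite /coeff big_nil. Qed.
Lemma coeff_cat (x y : chain m k) w : coeff (x ++ y) w = coeff x w + coeff y w.
Proof. by rewrite /coeff big_cat. Qed.
Lemma coeff_scale c (x : chain m k) w : coeff (chain_scale c x) w = c * coeff x w.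
Proof. by rewrite /coeff big_map mulr_sumr. Qed.
Lemma coeff_flatten (s : seq (chain m k)) w :
  coeff (flatten s) w = \sum_(x <- s) coeff x w.
Proof. by rewrite /coeff big_flatten. Qed.

Lemma dcoef1 a (w : word m) : dcoef [:: a] w =
  if w is [:: w0; w1] then (if [&& ladd w0 w1 == a, lnz w0 & lnz w1] then 1 else 0)
  else 0.
Proof.
case: w => [|w0 [|w1 [|w2 w]]] //.
rewrite /dcoef /= big_ord_recr big_ord0 /= add0r.
by case: (ladd w0 w1 == a); case: (lnz w0); case: (lnz w1).
Qed.

Lemma dcoef2 a b (w : word m) : dcoef [:: a; b] w =
  if w is [:: w0; w1; w2] then
    (if [&& ladd w0 w1 == a, w2 == b, lnz w0 & lnz w1] then 1 else 0)
    - (if [&& w0 == a, ladd w1 w2 == b, lnz w1 & lnz w2] then 1 else 0)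
  else 0.
Proof.
case: w => [|w0 [|w1 [|w2 [|w3 w]]]] //.
rewrite /dcoef /= !big_ord_recr big_ord0 /= add0r expr1 expr0.
rewrite !eqseq_cons !andbT.
case: (w2 == b); case: (w0 == a); case: (lnz w0); case: (lnz w1); case: (lnz w2);
 case: (ladd w0 w1 == a); case: (ladd w1 w2 == b) => //=.
Qed.
End S1.

Section S2.
Local Open Scope ring_scope.
Variable m : nat.
Variable k : comPzRingType.

Lemma dsum2 (z : chain m k) w0 w1 w2 : all (fun p => size p.2 == 2%N) z ->
 \sum_(p <- z) p.1 * (dcoef p.2 [:: w0; w1; w2])%:~R =
  (if lnz w0 && lnz w1 then coeff z [:: ladd w0 w1; w2] else 0)
  - (if lnz w1 && lnz w2 then coeff z [:: w0; ladd w1 w2] else 0).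
Proof.
elim: z => [|[c v] z IH] /=.
  by rewrite big_nil !coeff_nil; case: (_ && _); case: (_ && _); rewrite subr0.
case/andP=> Hv Hz; rewrite big_cons !coeff_cons IH //=.
case: v Hv => [|a [|b [|? ?]]] // _.
rewrite dcoef2 !eqseq_cons !andbT ![_ == a]eq_sym ![_ == b]eq_sym.
case: (a == ladd w0 w1); case: (b == w2); case: (lnz w0); case: (lnz w1); case: (lnz w2);
 case: (a == w0); case: (b == ladd w1 w2) => /=; rewrite ?mulr1 ?mulr0; ring.
Qed.

Lemma dsum2o (z : chain m k) w : all (fun p => size p.2 == 2%N) z -> size w != 3%N ->
 \sum_(p <- z) p.1 * (dcoef p.2 w)%:~R = 0.
Proof.
move=> Hz Hw; rewrite big_seq big1 // => [[c v]] /= Hin.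
have := allP Hz _ Hin => /=.
case: v {Hin} => [|a [|b [|? ?]]] // _.
by rewrite dcoef2; case: w Hw => [|w0 [|w1 [|w2 [|w3 w]]]] //; rewrite mulr0.
Qed.
End S2.

Section S3.
Local Open Scope ring_scope.
Variable m : nat.
Variable k : comPzRingType.

Definition Sset (I : {set 'I_m}) := [set A : {set 'I_m} | [&& A \subset I, A != set0 & A != I]].
Definition split01 (I : {set 'I_m}) (a b : letter m) := [&& lnz a, lnz b & ladd a b == chiA I].

Lemma chiA_inj (A B : {set 'I_m}) : chiA A = chiA B -> A = B.
Proof.
move=> H; apply/setP=> j; have := congr1 (fun f : letter m => f j) H.
by rewrite !chiAE; case: (j \in A); case: (j \in B).
Qed.

Lemma split01P I a b : split01 I a b ->
  [/\ a = chiA (supp a), b = chiA (I :\: supp a) & supp a \in Sset I].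
Proof.
case/and3P=> /lnzP [ja Ha] /lnzP [jb Hb] /eqP Hab.
have Hj j : (a j + b j)%N = (j \in I) :> nat.
  by rewrite -laddE Hab chiAE.
have Ea : a = chiA (supp a).
  apply/letterP=> j; rewrite chiAE /supp inE; have := Hj j.
  by case: (a j) => [|[|?]] //=; case: (j \in I).
split=> //.
  apply/letterP=> j; rewrite chiAE /supp !inE; have := Hj j.
  by case: (a j) => [|[|?]] //=; case: (j \in I); case: (b j) => [|[|?]].
rewrite inE; apply/and3P; split.
- apply/subsetP=> j; rewrite /supp inE; have := Hj j.
  by case: (j \in I); case: (a j).
- apply/eqP=> /setP /(_ ja); rewrite /supp !inE Ha.
  done.
- apply/eqP=> /setP /(_ jb); rewrite /supp !inE; have := Hj jb.
  move: Hb; case: (jb \in I) => /=; lia.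
Qed.

Lemma split01_chiA I A : A \in Sset I -> split01 I (chiA A) (chiA (I :\: A)).
Proof.
rewrite inE => /and3P [HAI HA0 HAI'].
apply/and3P; split.
- case/set0Pn: HA0 => j Hj; apply/lnzP; exists j; by rewrite chiAE Hj.
- have: A \proper I by rewrite properEneq HAI' HAI.
  case/properP=> _ [j HjI HjA]; apply/lnzP; exists j; by rewrite chiAE inE HjA HjI.
- apply/eqP/letterP=> j; rewrite laddE !chiAE inE.
  case HjA: (j \in A) => /=; last by [].
  by rewrite (subsetP HAI _ HjA).
Qed.

Lemma psi_split I a b :
  \sum_(A in Sset I) (if (chiA A == a) && (chiA (I :\: A) == b) then (1:k) else 0)
  = if split01 I a b then 1 else 0.
Proof.
case H: (split01 I a b).
  case: (split01P H) => Ea Eb HS.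
  rewrite (bigD1 (supp a)) //= -Ea -Eb !eqxx /= big1 ?addr0 // => A /andP [_ HA].
  case: eqP => // HAa; case/negP: HA; apply/eqP; apply: chiA_inj; by rewrite HAa.
rewrite big1 // => A HA; case: eqP => // Ea; case: eqP => // Eb.
by rewrite -Ea -Eb split01_chiA in H.
Qed.

Lemma coeff_upsi i I (w : word m) :
  coeff (chain_mul (u_chain k i) (psi k I)) w =
  if w is [:: w0; w1; w2] then
    (if (w0 == chiA [set i]) && split01 I w1 w2 then 1 else 0) else 0.
Proof.
rewrite /chain_mul /u_chain allpairs1l /psi -map_comp /coeff big_map big_enum_cond /=.
rewrite big_mkcondr /=.
case: w => [|w0 [|w1 [|w2 [|w3 w]]]]; try by rewrite big1 // => A _; rewrite !eqseq_cons ?andbF.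
case: eqP => [<-|Hne] /=.
  rewrite -psi_split; apply: eq_bigr => A _; by rewrite !eqseq_cons eqxx andbT mul1r.
by rewrite big1 // => A _; rewrite eqseq_cons; case: eqP => // /esym.
Qed.

Lemma coeff_psiu i I (w : word m) :
  coeff (chain_mul (psi k I) (u_chain k i)) w =
  if w is [:: w0; w1; w2] then
    (if (w2 == chiA [set i]) && split01 I w0 w1 then 1 else 0) else 0.
Proof.
rewrite /chain_mul /u_chain allpairs1r /psi -map_comp /coeff big_map big_enum_cond /=.
rewrite big_mkcondr /=.
case: w => [|w0 [|w1 [|w2 [|w3 w]]]]; try by rewrite big1 // => A _; rewrite !eqseq_cons ?andbF.
case: eqP => [<-|Hne] /=.
  rewrite -psi_split; apply: eq_bigr => A _; by rewrite !eqseq_cons eqxx !andbT mulr1.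
rewrite big1 // => A _; rewrite !eqseq_cons.
by case: (chiA [set i] =P w2) => [E|_]; [case: Hne | rewrite !andbF].
Qed.
End S3.

Section S4.
Local Open Scope ring_scope.
Variable m : nat.
Variable K : {set {set 'I_m}}.
Variable k : comPzRingType.

Definition gl (f : {ffun 'I_m -> 'I_3}) : letter m := [ffun j => (f j : nat)].
Definition lsub (a b : letter m) : letter m := [ffun j => (a j - b j)%N].
Definition Wit (al : letter m) : chain m k :=
  [seq (1, [:: gl f; lsub al (gl f)]) | f <- enum [pred f |
     [&& [forall j, gl f j <= al j]%N, valid_letter K (gl f) & valid_letter K (lsub al (gl f))]]].

Lemma Wit_size2 al : all (fun p => size p.2 == 2%N) (Wit al).
Proof. by apply/allP=> p /mapP [f _ ->]. Qed.

Lemma Wit_Omega al : in_Omega K (Wit al).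
Proof.
apply/allP=> p /mapP [f]; rewrite mem_enum inE => /and3P [_ H1 H2] -> /=.
by rewrite H1 H2.
Qed.

Lemma coeff_Wit al a b : coeff (Wit al) [:: a; b] =
  if [&& [forall j, a j < 3]%N, ladd a b == al, valid_letter K a & valid_letter K b]
  then 1 else 0.
Proof.
rewrite /coeff big_map big_enum_cond /= big_mkcondr /=.
case H: [&& _, _, _ & _].
  case/and4P: H => /forallP Hb /eqP Hab Va Vb.
  pose f0 : {ffun 'I_m -> 'I_3} := [ffun j => inord (a j)].
  have Ea : gl f0 = a by apply/letterP=> j; rewrite !ffunE inordK.
  have Eb : lsub al a = b.
    by apply/letterP=> j; rewrite ffunE -Hab laddE addKn.
  rewrite (bigD1 f0) /=; last first.
    rewrite inE /= Ea Eb Va Vb; apply/andP; split=> //; apply/forallP=> j; by rewrite -Hab laddE leq_addr.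
  rewrite Ea Eb !eqxx big1 ?addr0 // => f /andP [_ Hf].
  case: eqP => // /eqP; rewrite !eqseq_cons => /andP [/eqP Hfa _].
  case/negP: Hf; apply/eqP/ffunP=> j; apply: val_inj.
  by have := congr1 (fun x : letter m => x j) Hfa; rewrite !ffunE /= inordK // => <-.
rewrite big1 // => f; rewrite inE /= => /and3P [/forallP Hle V1 V2].
case: eqP => // /eqP; rewrite !eqseq_cons andbT => /andP [/eqP E1 /eqP E2].
suff Hc : [&& [forall j, a j < 3]%N, ladd a b == al, valid_letter K a & valid_letter K b].
  by rewrite Hc in H.
rewrite -E1 -E2 V1 V2; apply/and4P; split=> //.
  by apply/forallP=> j; rewrite ffunE ltn_ord.
apply/eqP/letterP=> j; rewrite laddE [lsub _ _ j]ffunE subnKC //; exact: Hle.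
Qed.
End S4.

Section S5.
Variable m : nat.
Variable K : {set {set 'I_m}}.

Lemma inK_of_proper I (X : letter m) j0 : MF K I ->
  (forall j, X j != 0 -> j \in I) -> j0 \in I -> X j0 = 0 -> supp X \in K.
Proof.
case/andP=> _ /forallP HI HX Hj0 HX0; apply: (implyP (HI _)).
apply/properP; split.
  by apply/subsetP=> j; rewrite inE => /HX.
by exists j0 => //; rewrite inE HX0.
Qed.

Lemma suppI I : supp (chiA I) = I :> {set 'I_m}.
Proof. by apply/setP=> j; rewrite inE chiAE; case: (j \in I). Qed.

Variables (I : {set 'I_m}) (i : 'I_m).
Hypothesis HMF : MF K I.
Hypothesis HiI : i \in I.
Let e := chiA [set i].
Let al := ladd (chiA I) e.

Lemma alE j : al j = ((j \in I) + (j == i))%N.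
Proof. by rewrite laddE !chiAE inE. Qed.

Lemma sumE (a b c : letter m) : ladd (ladd a b) c = al <->
  forall j, (a j + b j + c j = (j \in I) + (j == i))%N.
Proof.
split=> [H j|H]; first by rewrite -alE -H !laddE.
by apply/letterP=> j; rewrite alE !laddE H.
Qed.

Lemma mf3 a b c : lnz a -> lnz b -> lnz c -> ladd (ladd a b) c = al ->
  valid_letter K c && (valid_letter K (ladd a b) == (c != e)).
Proof.
move=> /lnzP [ja Ha] /lnzP [jb Hb] Hc /sumE Hs.
have HnI j : (j \in I) = false -> j != i.
  by move=> H; apply/eqP=> E; rewrite E HiI in H.
have Hsup (X : letter m) : (forall j, (X j <= a j + b j + c j)%N) ->
   forall j, X j != 0 -> j \in I.
  move=> HX j; have := HX j; rewrite Hs; case HjI: (j \in I) => //.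
  by rewrite (negPf (HnI _ HjI)) leqn0 => /eqP ->.
apply/andP; split.
  rewrite /valid_letter Hc /=.
  have Hle j : (c j <= a j + b j + c j)%N by rewrite leq_addl.
  case: (eqVneq ja i) => [Eja|Nja].
    case: (eqVneq jb i) => [Ejb|Njb].
      apply: (inK_of_proper HMF (Hsup _ Hle) HiI).
      move: Ha Hb (Hs i); rewrite Eja Ejb HiI eqxx /=; lia.
    have HjbI : jb \in I by apply: (Hsup b) => // j; lia.
    apply: (inK_of_proper HMF (Hsup _ Hle) HjbI).
    have := Hs jb; rewrite HjbI (negPf Njb); move: Hb; lia.
  have HjaI : ja \in I by apply: (Hsup a) => // j; lia.
  apply: (inK_of_proper HMF (Hsup _ Hle) HjaI).
  have := Hs ja; rewrite HjaI (negPf Nja); move: Ha; lia.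
have Hab : lnz (ladd a b) by apply: lnz_laddl; apply/lnzP; exists ja.
rewrite /valid_letter Hab /=.
case: (eqVneq c e) => [Ec|Nc] /=.

  suff -> : supp (ladd a b) = I by case/andP: HMF => /negbTE ->.
  apply/setP=> j; rewrite inE laddE; have := Hs j; rewrite Ec chiAE inE.
  case: (j \in I); case: (j == i) => /=; lia.
rewrite eqb_id.
have Hle j : (ladd a b j <= a j + b j + c j)%N by rewrite laddE leq_addr.
case/lnzP: Hc => jc Hc.
have [jd Hd] : exists jd, c jd != e jd.
  apply/existsP; apply: contraNT Nc => /existsPn H; apply/eqP/letterP => j.
  by have := H j; rewrite negbK => /eqP.
move: Hd; rewrite /e chiAE inE => Hd.
case: (eqVneq jc i) => [Ejc|Njc].
  case: (eqVneq jd i) => [Ejd|Njd].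
    apply: (inK_of_proper HMF (Hsup _ Hle) HiI).
    have := Hs i; rewrite HiI eqxx laddE; move: Hc Hd; rewrite Ejc Ejd eqxx /=; lia.
  have HjdI : jd \in I.
    apply: (Hsup c) => [j|]; first lia. by move: Hd; rewrite (negPf Njd).
  apply: (inK_of_proper HMF (Hsup _ Hle) HjdI).
  have := Hs jd; rewrite HjdI (negPf Njd) laddE; move: Hd; rewrite (negPf Njd) /=; lia.
have HjcI : jc \in I by apply: (Hsup c) => // j; lia.
apply: (inK_of_proper HMF (Hsup _ Hle) HjcI).
have := Hs jc; rewrite HjcI (negPf Njc) laddE; move: Hc; lia.
Qed.

Definition G3 (w0 w1 w2 : letter m) :=
  [&& lnz w0, lnz w1, lnz w2 & ladd (ladd w0 w1) w2 == al].

Lemma lnz_e : lnz e.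
Proof. by apply/lnzP; exists i; rewrite /e chiAE inE eqxx. Qed.

Lemma T1E w0 w1 w2 : (w0 == e) && split01 I w1 w2 = (w0 == e) && G3 w0 w1 w2.
Proof.
case: eqP => //= ->; rewrite /split01 /G3 lnz_e /=.
case: (lnz w1); case: (lnz w2) => //=.
apply/eqP/eqP=> [H|/sumE H].
  apply/sumE=> j; have := congr1 (fun x : letter m => x j) H.
  by rewrite /e !laddE !chiAE inE => <-; case: (j == i); case: (j \in I) => /=; lia.
apply/letterP=> j; have := H j; rewrite /e laddE !chiAE inE; case: (j == i); case: (j \in I) => /=; lia.
Qed.

Lemma T2E w0 w1 w2 : (w2 == e) && split01 I w0 w1 = (w2 == e) && G3 w0 w1 w2.
Proof.
case: eqP => //= ->; rewrite /split01 /G3 lnz_e /= ?andbT.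
case: (lnz w0); case: (lnz w1) => //=.
apply/eqP/eqP=> [H|/sumE H].
  apply/sumE=> j; have := congr1 (fun x : letter m => x j) H.
  by rewrite /e !laddE !chiAE inE => <-; case: (j == i); case: (j \in I) => /=; lia.
apply/letterP=> j; have := H j; rewrite /e laddE !chiAE inE; case: (j == i); case: (j \in I) => /=; lia.
Qed.

Lemma bnd_of (a c : letter m) : ladd a c = al -> [forall j, a j < 3].
Proof.
move=> H; apply/forallP=> j; have := congr1 (fun x : letter m => x j) H.
rewrite alE laddE; case: (j \in I); case: (j == i) => /=; lia.
Qed.

Lemma R1E (w0 w1 w2 : letter m) : lnz w0 && lnz w1 &&
  [&& [forall j, ladd w0 w1 j < 3], ladd (ladd w0 w1) w2 == al,
      valid_letter K (ladd w0 w1) & valid_letter K w2]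
  = G3 w0 w1 w2 && (w2 != e).
Proof.
rewrite /G3; case H0: (lnz w0); case H1: (lnz w1) => //=.
case: eqP => [Hs|_]; last by rewrite !andbF.
case H2: (lnz w2); last by rewrite /valid_letter H2 !andbF.
have /andP [V2 /eqP V01] := mf3 H0 H1 H2 Hs.
by rewrite V2 V01 andbT (bnd_of Hs).
Qed.

Lemma R2E (w0 w1 w2 : letter m) : lnz w1 && lnz w2 &&
  [&& [forall j, w0 j < 3], ladd w0 (ladd w1 w2) == al,
      valid_letter K w0 & valid_letter K (ladd w1 w2)]
  = G3 w0 w1 w2 && (w0 != e).
Proof.
rewrite /G3 -laddA; case H1: (lnz w1); case H2: (lnz w2); rewrite /= ?andbF //.
case: eqP => [Hs|_]; last by rewrite !andbF.
case H0: (lnz w0); last by rewrite /valid_letter H0 !andbF.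
have Hs' : ladd (ladd w2 w1) w0 = al.
  by rewrite -Hs laddC laddA [ladd w2 w1]laddC.
have /andP [V0 /eqP V21] := mf3 H2 H1 H0 Hs'.
rewrite laddC V21 V0 andbT /=.
by rewrite laddA in Hs; rewrite (bnd_of Hs).
Qed.
End S5.

Section S6.
Local Open Scope ring_scope.
Variable m : nat.
Variable K : {set {set 'I_m}}.
Variable k : comPzRingType.

Lemma sign_even n : (-1) ^+ (1 * (2 * n - 2)) = 1 :> k.
Proof. case: n => [|n]; first by rewrite expr0. by rewrite mul1n mulnS addKn -signr_odd oddM. Qed.

Lemma ifand (b c : bool) : (if b then (if c then 1 else 0) else 0) = (if b && c then 1 else 0 : k).
Proof. by case: b. Qed.

Lemma part3 i I : MF K I -> i \in I ->
  is_boundary K (gcomm 1 (2 * #|I| - 2) (u_chain k i) (psi k I)).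
Proof.
move=> HMF HiI.
exists (Wit K k (ladd (chiA I) (chiA [set i]))); split; first exact: Wit_Omega.
move=> w; rewrite /gcomm /chain_add coeff_cat coeff_scale coeff_upsi coeff_psiu sign_even.
case: w => [|w0 [|w1 [|w2 [|w3 w]]]]; try by rewrite (dsum2o (Wit_size2 _ _ _)) // mulr0 addr0.
rewrite (dsum2 _ _ _ (Wit_size2 _ _ _)) !coeff_Wit !ifand.
rewrite (R1E HMF HiI) (R2E HMF HiI) (T1E HMF HiI) (T2E HMF HiI).
case: (G3 _ _ _ _ _); case: (_ == _); case: (_ == _) => /=; ring.
Qed.
End S6.

Section S7.
Variable m : nat.
Let E (x : 'I_m) : letter m := chiA [set x].
Lemma EE x l : E x l = (l == x) :> nat. Proof. by rewrite /E chiAE inE. Qed.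
Lemma lnzE x : lnz (E x). Proof. by apply/lnzP; exists x; rewrite EE eqxx. Qed.

Lemma Echar (a : letter m) x : a x = 1%N -> (forall l, l != x -> a l = 0%N) -> a = E x.
Proof.
move=> H1 H0; apply/letterP=> l; rewrite EE.
by case: (eqVneq l x) => [->|N]; [rewrite H1 | rewrite H0].
Qed.

Lemma caseA (i j : 'I_m) (a b : letter m) :
  (forall l, a l + b l = (l == i) + (l == j))%N -> a i != 0%N -> b j != 0%N ->
  a = E i /\ b = E j.
Proof.
move=> Hs Ha Hb; split; apply: Echar.
- have := Hs i; rewrite eqxx; case: (eqVneq i j) => [Ex|N] /=.
    by subst j; move: Ha Hb; lia.
  by move: Ha; lia.
- move=> l Nl; have := Hs l; rewrite (negPf Nl); case: (eqVneq l j) => [Ex|N] /=.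
    by subst l; move: Hb; lia.
  lia.
- have := Hs j; rewrite eqxx; case: (eqVneq j i) => [Ex|N] /=.
    by subst j; move: Ha Hb; lia.
  by move: Hb; lia.
- move=> l Nl; have := Hs l; rewrite (negPf Nl); case: (eqVneq l i) => [Ex|N] /=.
    by subst l; move: Ha; lia.
  lia.
Qed.

Lemma split2 (i j : 'I_m) (a b : letter m) :
  [&& ladd a b == ladd (E i) (E j), lnz a & lnz b] =
  ((a == E i) && (b == E j)) || ((a == E j) && (b == E i)).
Proof.
apply/idP/idP; last first.
  case/orP=> /andP [/eqP -> /eqP ->]; rewrite !lnzE ?eqxx // laddC eqxx //.
case/and3P=> /eqP /letterP H /lnzP [la Ha] /lnzP [lb Hb].
have Hs l : (a l + b l = (l == i) + (l == j))%N by have := H l; rewrite !laddE !EE.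
have Hs' l : (a l + b l = (l == j) + (l == i))%N by rewrite Hs addnC.
have Hla : (la == i) || (la == j).
  by have := Hs la; move: Ha; case: (la == i); case: (la == j) => //=; lia.
have Hlb : (lb == i) || (lb == j).
  by have := Hs lb; move: Hb; case: (lb == i); case: (lb == j) => //=; lia.
case/orP: Hla => /eqP Ela; subst la; case/orP: Hlb => /eqP Elb; subst lb.
- case: (eqVneq i j) => [Eij|Nij].
    subst j; by case: (caseA Hs Ha Hb) => -> ->; rewrite !eqxx.
  move: (Hs i) Ha Hb; rewrite eqxx; case: eqP => [Eij|_]; first by rewrite Eij eqxx in Nij.
  lia.
- by case: (caseA Hs Ha Hb) => -> ->; rewrite !eqxx.
- by case: (caseA Hs' Ha Hb) => -> ->; rewrite !eqxx orbT.
- case: (eqVneq i j) => [Eij|Nij].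
    subst j; by case: (caseA Hs Ha Hb) => -> ->; rewrite !eqxx.
  move: (Hs j) Ha Hb; rewrite eqxx; case: eqP => [Eij|_]; first by rewrite Eij eqxx in Nij.
  lia.
Qed.
End S7.

Section S8.
Local Open Scope ring_scope.
Variable m : nat.
Variable K : {set {set 'I_m}}.
Variable k : comPzRingType.

Lemma split2' (i j : 'I_m) (a b : letter m) :
  [&& ladd a b == ladd (chiA [set i]) (chiA [set j]), lnz a & lnz b] =
  ((a == chiA [set i]) && (b == chiA [set j])) || ((a == chiA [set j]) && (b == chiA [set i])).
Proof. exact: split2. Qed.
Lemma lnzE' (i : 'I_m) : lnz (chiA [set i]). Proof. exact: lnzE. Qed.

Lemma supp_E2 (i j : 'I_m) : supp (ladd (chiA [set i]) (chiA [set j])) = [set i; j].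
Proof.
apply/setP=> l; rewrite !inE laddE !chiAE !inE.
by case: (l == i); case: (l == j).
Qed.

Lemma valid_E2 (i j : 'I_m) : [set i; j] \in K -> valid_letter K (ladd (chiA [set i]) (chiA [set j])).
Proof. by move=> H; rewrite /valid_letter supp_E2 H lnz_laddl // lnzE'. Qed.

Lemma E_inj (i j : 'I_m) : chiA [set i] = chiA [set j] -> i = j.
Proof. by move/chiA_inj/setP/(_ i); rewrite !inE eqxx => /esym/eqP. Qed.

Lemma part1 i : simplicial_complex K -> is_boundary K (chain_mul (u_chain k i) (u_chain k i)).
Proof.
case=> _ HK; exists [:: (1, [:: ladd (chiA [set i]) (chiA [set i])])]; split.
  by rewrite /in_Omega /= valid_E2 // setUid.
move=> w; rewrite /chain_mul /u_chain /= coeff_cons coeff_nil big_cons big_nil !dcoef1.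
case: w => [|w0 [|w1 [|w2 w]]] //=; rewrite ?addr0 ?mul1r ?mulr0z //; try by rewrite !eqseq_cons ?andbF.
rewrite split2' orbb !eqseq_cons andbT [_ == w0]eq_sym [_ == w1]eq_sym.
by case: (_ && _); rewrite ?mulr1 ?mulr1z ?mulr0z.
Qed.

Lemma part2 i j : [set i; j] \in K ->
  is_boundary K (gcomm 1 1 (u_chain k i) (u_chain k j)).
Proof.
move=> HK; case: (eqVneq i j) => [Eij|Nij].
  subst j; exists [:: (1, [:: ladd (chiA [set i]) (chiA [set i])]);
                      (1, [:: ladd (chiA [set i]) (chiA [set i])])]; split.
    by rewrite /in_Omega /= valid_E2.
  move=> w; rewrite /gcomm /chain_add /chain_scale /chain_mul /u_chain /=.
  rewrite !coeff_cons !coeff_nil !big_cons big_nil !dcoef1.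
  case: w => [|w0 [|w1 [|w2 w]]] //=; rewrite ?addr0 ?add0r ?mul1r ?mulr0 ?mulr0z ?addr0 //; try by rewrite !eqseq_cons ?andbF ?mulr0 ?addr0.
  rewrite split2' orbb !eqseq_cons andbT [_ == w0]eq_sym [_ == w1]eq_sym.
  by case: (_ && _); rewrite /= ?mulr1 ?mulr1z ?mulr0z ?mulr0 ?expr1 ?opprK ?addr0.
exists [:: (1, [:: ladd (chiA [set i]) (chiA [set j])])]; split.
  by rewrite /in_Omega /= valid_E2.
move=> w; rewrite /gcomm /chain_add /chain_scale /chain_mul /u_chain /=.
rewrite !coeff_cons !coeff_nil !big_cons big_nil !dcoef1.
case: w => [|w0 [|w1 [|w2 w]]] //=; rewrite ?addr0 ?add0r ?mul1r ?mulr0 ?mulr0z ?addr0 //; try by rewrite !eqseq_cons ?andbF ?mulr0 ?addr0.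
rewrite split2' !eqseq_cons !andbT ![_ == w0]eq_sym ![_ == w1]eq_sym.
case: (eqVneq w0 (chiA [set i])) => [E0|N0].
  have N0' : w0 != chiA [set j].
    by apply/eqP; rewrite E0 => /E_inj E; rewrite E eqxx in Nij.
  rewrite (negPf N0') /= ?andbF ?orbF.
  by case: (_ == _); rewrite /= ?mulr1 ?mulr1z ?mulr0z ?mulr0 ?expr1 ?opprK ?addr0.
rewrite /=.
by case: (_ == _); case: (_ == _); rewrite /= ?mulr1 ?mulr1z ?mulr0z ?mulr0 ?expr1 ?opprK ?addr0 ?add0r.
Qed.
End S8.

Section S9.
Variable m : nat.
Variable K : {set {set 'I_m}}.
Variable L : {set 'I_m}.
Hypothesis HA : AMF K L.

Lemma inK_small (X : letter m) x y :
  (forall j, X j != 0 -> j \in L) -> x \in L -> y \in L -> x != y ->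
  X x = 0 -> X y = 0 -> supp X \in K.
Proof.
move=> HX Hx Hy Nxy X0 Y0; case/andP: HA => /forallP H _.
apply: (implyP (H _)); apply/andP; split.
  by apply/subsetP=> j; rewrite inE => /HX.
have Hsub : supp X \subset L :\: [set x; y].
  apply/subsetP=> j; rewrite !inE => Hj; rewrite (HX _ Hj) andbT.
  by apply/negP=> /orP [] /eqP E; move: Hj; rewrite E ?X0 ?Y0.
have Hxy : [set x; y] \subset L by apply/subsetP=> j; rewrite !inE => /orP [] /eqP ->.
have := subset_leq_card Hsub; rewrite cardsD (setIidPr Hxy) cards2 Nxy.
have := subset_leq_card Hxy; rewrite cards2 Nxy; lia.
Qed.

Definition cu (c : letter m) :=
  [exists i, [&& i \in L, L :\ i \notin K & c == chiA [set i]]].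

Lemma suppD1 (a b c : letter m) x : (forall j, a j + b j + c j = (j \in L) :> nat) ->
  c = chiA [set x] -> x \in L -> supp (ladd a b) = L :\ x.
Proof.
move=> Hs Ec Hx; apply/setP=> j; rewrite !inE laddE; have := Hs j; rewrite Ec chiAE inE.
case: (eqVneq j x) => [E|N] /=; first by subst j; rewrite Hx; lia.
case: (j \in L) => /=; lia.
Qed.

Lemma amf3 (a b c : letter m) : lnz a -> lnz b -> lnz c -> ladd (ladd a b) c = chiA L ->
  valid_letter K c && (valid_letter K (ladd a b) == ~~ cu c).
Proof.
move=> /lnzP [ja Ha] /lnzP [jb Hb] Hc Habc.
have Hs j : (a j + b j + c j = (j \in L))%N.
  by have := congr1 (fun x : letter m => x j) Habc; rewrite !laddE chiAE.
have Hsup (X : letter m) : (forall j, (X j <= a j + b j + c j)%N) ->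
   forall j, X j != 0 -> j \in L.
  move=> HX j; have := HX j; rewrite Hs; case: (j \in L) => //; lia.
have HjaL : ja \in L by apply: (Hsup a) => // j; lia.
have HjbL : jb \in L by apply: (Hsup b) => // j; lia.
have Nab : ja != jb.
  by apply/eqP=> E; subst jb; have := Hs ja; move: Ha Hb; case: (ja \in L) => /=; lia.
apply/andP; split.
  rewrite /valid_letter Hc /=.
  apply: (inK_small (x := ja) (y := jb)) => //.
  - by apply: (Hsup c) => j; lia.
  - by have := Hs ja; move: Ha; rewrite HjaL /=; lia.
  - by have := Hs jb; move: Hb; rewrite HjbL /=; lia.
have Hab : lnz (ladd a b) by apply: lnz_laddl; apply/lnzP; exists ja.
rewrite /valid_letter Hab /=.
case: (boolP (cu c)) => [/existsP [x /and3P [HxL HxK /eqP Ec]]|Ncu] /=.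
  by rewrite (suppD1 Hs Ec HxL) (negPf HxK).
rewrite eqb_id.
case/lnzP: Hc => jc Hc.
have HjcL : jc \in L by apply: (Hsup c) => // j; lia.
have Hle j : (ladd a b j <= a j + b j + c j)%N by rewrite laddE leq_addr.
case: (eqVneq c (chiA [set jc])) => [Ec|Nc].
  rewrite (suppD1 Hs Ec HjcL).
  apply: contraNT Ncu => HK; apply/existsP; exists jc; by rewrite HjcL HK Ec eqxx.
have [jd Hd] : exists jd, c jd != chiA [set jc] jd.
  apply/existsP; apply: contraNT Nc => /existsPn H; apply/eqP/letterP => j.
  by have := H j; rewrite negbK => /eqP.
move: Hd; rewrite chiAE inE.
case: (eqVneq jd jc) => [E|Njd] /=.
  by subst jd; have := Hs jc; rewrite HjcL; move: Hc; lia.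
move=> Hd.
have HjdL : jd \in L by apply: (Hsup c) => // j; lia.
apply: (inK_small (x := jc) (y := jd)) => //.
- exact: Hsup.
- by rewrite eq_sym.
- by rewrite laddE; have := Hs jc; rewrite HjcL; move: Hc; lia.
- by rewrite laddE; have := Hs jd; rewrite HjdL; move: Hd; lia.
Qed.
End S9.

Section S10.
Variable m : nat.
Variable K : {set {set 'I_m}}.
Variable L : {set 'I_m}.
Hypothesis HA : AMF K L.

Definition G4 (w0 w1 w2 : letter m) :=
  [&& lnz w0, lnz w1, lnz w2 & ladd (ladd w0 w1) w2 == chiA L].

Lemma sum4E (a b c : letter m) : ladd (ladd a b) c = chiA L <->
  forall j, (a j + b j + c j = (j \in L))%N.
Proof.
split=> [H j|H]; first by have := congr1 (fun x : letter m => x j) H; rewrite !laddE chiAE.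
by apply/letterP=> j; rewrite !laddE chiAE H.
Qed.

Lemma T1E4 i w0 w1 w2 : i \in L ->
  (w0 == chiA [set i]) && split01 (L :\ i) w1 w2 = (w0 == chiA [set i]) && G4 w0 w1 w2.
Proof.
move=> HiL; case: eqP => //= ->; rewrite /split01 /G4 lnzE' /=.
case: (lnz w1); case: (lnz w2) => //=.
apply/eqP/eqP=> [H|/sum4E H].
  apply/sum4E=> j; have := congr1 (fun x : letter m => x j) H.
  rewrite !laddE !chiAE !inE.
  by case: (eqVneq j i) => [E|N] /=; [subst j; rewrite HiL /=; lia | case: (j \in L) => /=; lia].
apply/letterP=> j; have := H j; rewrite laddE !chiAE !inE.
by case: (eqVneq j i) => [E|N] /=; [subst j; rewrite HiL; lia | case: (j \in L) => /=; lia].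
Qed.

Lemma T2E4 i w0 w1 w2 : i \in L ->
  (w2 == chiA [set i]) && split01 (L :\ i) w0 w1 = (w2 == chiA [set i]) && G4 w0 w1 w2.
Proof.
move=> HiL; case: eqP => //= ->; rewrite /split01 /G4 lnzE' /= ?andbT.
case: (lnz w0); case: (lnz w1) => //=.
apply/eqP/eqP=> [H|/sum4E H].
  apply/sum4E=> j; have := congr1 (fun x : letter m => x j) H.
  rewrite !laddE !chiAE !inE.
  by case: (eqVneq j i) => [E|N] /=; [subst j; rewrite HiL /=; lia | case: (j \in L) => /=; lia].
apply/letterP=> j; have := H j; rewrite laddE !chiAE !inE.
by case: (eqVneq j i) => [E|N] /=; [subst j; rewrite HiL; lia | case: (j \in L) => /=; lia].
Qed.

Lemma bnd4 (a c : letter m) : ladd a c = chiA L -> [forall j, a j < 3].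
Proof.
move=> H; apply/forallP=> j; have := congr1 (fun x : letter m => x j) H.
rewrite chiAE laddE; case: (j \in L) => /=; lia.
Qed.

Lemma R1E4 (w0 w1 w2 : letter m) : lnz w0 && lnz w1 &&
  [&& [forall j, ladd w0 w1 j < 3], ladd (ladd w0 w1) w2 == chiA L,
      valid_letter K (ladd w0 w1) & valid_letter K w2]
  = G4 w0 w1 w2 && ~~ cu K L w2.
Proof.
rewrite /G4; case H0: (lnz w0); case H1: (lnz w1) => //=.
case: eqP => [Hs|_]; last by rewrite !andbF.
case H2: (lnz w2); last by rewrite /valid_letter H2 !andbF.
have /andP [V2 /eqP V01] := amf3 HA H0 H1 H2 Hs.
by rewrite V2 V01 andbT (bnd4 Hs).
Qed.

Lemma R2E4 (w0 w1 w2 : letter m) : lnz w1 && lnz w2 &&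
  [&& [forall j, w0 j < 3], ladd w0 (ladd w1 w2) == chiA L,
      valid_letter K w0 & valid_letter K (ladd w1 w2)]
  = G4 w0 w1 w2 && ~~ cu K L w0.
Proof.
rewrite /G4 -laddA; case H1: (lnz w1); case H2: (lnz w2); rewrite /= ?andbF //.
case: eqP => [Hs|_]; last by rewrite !andbF.
case H0: (lnz w0); last by rewrite /valid_letter H0 !andbF.
have Hs' : ladd (ladd w2 w1) w0 = chiA L.
  by rewrite -Hs laddC laddA [ladd w2 w1]laddC.
have /andP [V0 /eqP V21] := amf3 HA H2 H1 H0 Hs'.
rewrite laddC V21 V0 andbT /=.
by rewrite laddA in Hs; rewrite (bnd4 Hs).
Qed.
End S10.

Section S11.
Local Open Scope ring_scope.
Variable m : nat.
Variable K : {set {set 'I_m}}.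
Variable k : comPzRingType.

Lemma cu_sum (L : {set 'I_m}) (c : letter m) :
  \sum_(i in L | L :\ i \notin K) (if c == chiA [set i] then 1 else 0 : k)
  = if cu K L c then 1 else 0.
Proof.
case: (boolP (cu K L c)) => [/existsP [x /and3P [HxL HxK /eqP Ec]]|Ncu].
  rewrite (bigD1 x) /=; last by rewrite HxL HxK.
  rewrite Ec eqxx big1 ?addr0 // => i /andP [_ Nix].
  by case: eqP => // /E_inj E; rewrite E eqxx in Nix.
rewrite big1 // => i /andP [HiL HiK]; case: eqP => // Ec.
by case/existsP: Ncu; exists i; rewrite HiL HiK Ec eqxx.
Qed.

Lemma part4 (L : {set 'I_m}) : AMF K L -> is_boundary K (amf_sum K k L).
Proof.
move=> HA.
exists (Wit K k (chiA L)); split; first exact: Wit_Omega.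
move=> w; rewrite /amf_sum coeff_flatten big_map big_filter big_enum_cond /=.
under eq_bigr => i _ do rewrite /gcomm /chain_add coeff_cat coeff_scale coeff_upsi coeff_psiu sign_even.
case: w => [|w0 [|w1 [|w2 [|w3 w]]]];
  try by rewrite (dsum2o (Wit_size2 _ _ _)) // big1 // => i _; rewrite mulr0 addr0.
rewrite (dsum2 _ _ _ (Wit_size2 _ _ _)) !coeff_Wit !ifand (R1E4 HA) (R2E4 HA).
rewrite (eq_bigr (fun i => (if G4 L w0 w1 w2 then 1 else 0) *
   ((if w0 == chiA [set i] then 1 else 0) - (if w2 == chiA [set i] then 1 else 0)))); last first.
  move=> i /andP [HiL _]; rewrite (T1E4 HA _ _ _ HiL) (T2E4 HA _ _ _ HiL).
  by case: (G4 _ _ _ _); case: (_ == _); case: (_ == _) => /=; ring.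
rewrite -mulr_sumr sumrB !cu_sum.
by case: (G4 _ _ _ _); case: (cu _ _ _); case: (cu _ _ _) => /=; ring.
Qed.
End S11.


Unset Implicit Arguments.
Theorem mainTheorem13 (k : comPzRingType) (m : nat) (K : {set {set 'I_m}}) :
  simplicial_complex K ->
  [/\ (forall i : 'I_m, is_boundary K (chain_mul (u_chain k i) (u_chain k i))),
      (forall i j : 'I_m, [set i; j] \in K ->
         is_boundary K (gcomm 1 1 (u_chain k i) (u_chain k j))),
      (forall (i : 'I_m) (I : {set 'I_m}), MF K I -> i \in I ->
         is_boundary K (gcomm 1 (2 * #|I| - 2) (u_chain k i) (psi k I)))
    & (forall L : {set 'I_m}, AMF K L -> is_boundary K (amf_sum K k L))].
Proof.
move=> HK; split.
- by move=> i; apply: part1.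
- by move=> i j; apply: part2.
- by move=> i I; apply: part3.
- by move=> L; apply: part4.
Qed.
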